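(* Let $f_i:\mathbb{R}^{n_{i-1}}\to\mathbb{R}^{n_i}$ and $g_i:\mathbb{R}^{n_i}\to\mathbb{R}^{n_{i-1}}$, let $\mathbf{h}_{i-1}\in\mathbb{R}^{n_{i-1}}$ and $\mathbf{h}_i=f_i(\mathbf{h}_{i-1})$. For a target $\hat{\mathbf{h}}_i\in\mathbb{R}^{n_i}$, define the difference-target-propagation target of layer $i-1$ by $$\hat{\mathbf{h}}_{i-1}=\mathbf{h}_{i-1}+g_i(\hat{\mathbf{h}}_i)-g_i(\mathbf{h}_i).$$ Assume $f_i$ is differentiable at $\mathbf{h}_{i-1}$ with Jacobian $J_{f_i}$ and $g_i$ is differentiable at $\mathbf{h}_i$ with Jacobian $J_{g_i}$, and that the largest eigenvalue of $(I-J_{f_i}J_{g_i})^T(I-J_{f_i}J_{g_i})$ is less than $1$. Then, if $\hat{\mathbf{h}}_i-\mathbf{h}_i$ is sufficiently small (and nonzero), i.e. there is $\delta>0$ such that for every $\hat{\mathbf{h}}_i$ with $0<\|\hat{\mathbf{h}}_i-\mathbf{h}_i\|_2<\delta$, $$\|\hat{\mathbf{h}}_i-f_i(\hat{\mathbf{h}}_{i-1})\|_2^2<\|\hat{\mathbf{h}}_i-\mathbf{h}_i\|_2^2.$$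
   Context: In a layered network $\mathbf{h}_i=f_i(\mathbf{h}_{i-1})$, $g_i$ is a learned feedback map meant to approximately invert $f_i$; $\hat{\mathbf{h}}_i$ is a target value for layer $i$. *)

(* Defs.v *)
From HB Require Import structures.
From mathcomp Require Import all_boot all_order all_algebra.
From mathcomp Require Import all_classical all_reals all_analysis.
Set Implicit Arguments. Unset Strict Implicit. Unset Printing Implicit Defensive.
Import Order.TTheory GRing.Theory Num.Theory.
Local Open Scope ring_scope.

(* Euclidean (l2) norm on R^n; the default norm on 'rV is the max norm. *)
Definition norm2 (R : realType) (n : nat) (v : 'rV[R]_n) : R :=
  Num.sqrt (\sum_(j < n) v ord0 j ^+ 2).

(* Mathematical Jacobian (n x m matrix, acting on column vectors) of
   f : R^m -> R^n at p.  The library's 'J f p acts on row vectors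
   (D_v f p = v *m 'J f p), so it is the transpose. *)
Definition Jac (R : realType) (m n : nat) (f : 'rV[R]_m -> 'rV[R]_n)
  (p : 'rV[R]_m) : 'M[R]_(n, m) := (jacobian f p)^T.

Definition dtp_target (R : realType) (m n : nat) (g : 'rV[R]_n -> 'rV[R]_m)
  (h_prev : 'rV[R]_m) (h : 'rV[R]_n) (hhat : 'rV[R]_n) : 'rV[R]_m :=
  h_prev + g hhat - g h.

(* Main.v *)
Require Import Defs.
From HB Require Import structures.
From mathcomp Require Import all_boot all_order all_algebra.
From mathcomp Require Import all_classical all_reals all_analysis.
Import Order.TTheory GRing.Theory Num.Theory numFieldNormedType.Exports.
Local Open Scope ring_scope.
From mathcomp Require Import lra ring.
Set Implicit Arguments. Unset Strict Implicit.

Section Dot.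
Variable R : realType.
Variable n : nat.
Definition dot (x y : 'rV[R]_n) : R := (x *m y^T) ord0 ord0.

Lemma dotE x y : dot x y = \sum_j x ord0 j * y ord0 j.
Proof. by rewrite /dot !mxE; apply: eq_bigr => j _; rewrite mxE. Qed.

Lemma dotC x y : dot x y = dot y x.
Proof. by rewrite !dotE; apply: eq_bigr => j _; rewrite mulrC. Qed.

Lemma dotDl x y z : dot (x + y) z = dot x z + dot y z.
Proof. by rewrite /dot mulmxDl mxE. Qed.

Lemma dotZl a x z : dot (a *: x) z = a * dot x z.
Proof. by rewrite /dot -scalemxAl mxE. Qed.

Lemma dotNl x z : dot (- x) z = - dot x z.
Proof. by rewrite -scaleN1r dotZl mulN1r. Qed.

Lemma dotDr x y z : dot z (x + y) = dot z x + dot z y.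
Proof. by rewrite dotC dotDl !(dotC z). Qed.

Lemma dotZr a x z : dot z (a *: x) = a * dot z x.
Proof. by rewrite dotC dotZl dotC. Qed.

Lemma dotNr x z : dot z (- x) = - dot z x.
Proof. by rewrite dotC dotNl dotC. Qed.

Lemma dot0l z : dot 0 z = 0.
Proof. by rewrite /dot mul0mx mxE. Qed.

Lemma dot_ge0 x : 0 <= dot x x.
Proof. by rewrite dotE sumr_ge0 // => j _; rewrite -expr2 sqr_ge0. Qed.

Lemma dot_eq0 x : dot x x = 0 -> x = 0.
Proof.
rewrite dotE => /eqP; rewrite psumr_eq0; last by move=> j _; rewrite -expr2 sqr_ge0.
move=> /allP H; apply/rowP => j; rewrite mxE.
by have /(_ (mem_index_enum j)) := H j; rewrite implyTb mulf_eq0 orbb => /eqP.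
Qed.

Lemma norm2E x : norm2 x = Num.sqrt (dot x x).
Proof. by rewrite /norm2 dotE; congr Num.sqrt; apply: eq_bigr => j _; rewrite expr2. Qed.

Lemma norm2_sq x : norm2 x ^+ 2 = dot x x.
Proof. by rewrite norm2E sqr_sqrtr // dot_ge0. Qed.

End Dot.
Arguments dot {R n}.

Lemma dot_mul (R : realType) n m (x : 'rV[R]_n) (A : 'M[R]_(n, m)) y :
  dot (x *m A) y = dot x (y *m A^T).
Proof. by rewrite /dot trmx_mul trmxK mulmxA. Qed.

Lemma cont_sum (R : realType) (T : topologicalType) (I : Type) (r : seq I)
  (F : I -> T -> R) : (forall i, continuous (F i)) ->
  continuous (fun x => \sum_(i <- r) F i x).
Proof.
move=> Fc; elim: r => [|a r IH].
  under eq_fun do rewrite big_nil; exact: cst_continuous.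
under eq_fun do rewrite big_cons.
move=> x; exact: (cvgD (Fc a x) (IH x)).
Qed.

Lemma cont_quad (R : realType) n k (B : 'M[R]_(n, k)) :
  continuous (fun v : 'rV[R]_n => \sum_j (v *m B) ord0 j * (v *m B) ord0 j).
Proof.
apply: cont_sum => j.
have cj : continuous (fun v : 'rV[R]_n => (v *m B) ord0 j).
  under eq_fun do rewrite mxE.
  apply: cont_sum => i x.
  exact: (cvgM (@coord_continuous R 1 n ord0 i x) (@cst_continuous _ R (B i j) x)).
by move=> x; exact: (cvgM (cj x) (cj x)).
Qed.

Lemma coord_le_norm (R : realType) n (v : 'rV[R]_n) j : `|v ord0 j| <= `|v|.
Proof.
change (`|v ord0 j| <= mx_norm v); rewrite mx_normrE.
exact: (le_bigmax _ (fun ij : 'I_1 * 'I_n => `|v ij.1 ij.2|) (ord0, j)).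
Qed.

Lemma norm_le_norm2 (R : realType) n (v : 'rV[R]_n) : `|v| <= norm2 v.
Proof.
change (mx_norm v <= norm2 v); rewrite mx_normrE.
apply: bigmax_le; first by rewrite /norm2 sqrtr_ge0.
move=> [i j] _ /=; rewrite (ord1 i) /norm2.
rewrite -(sqrtr_sqr (v ord0 j)); apply: ler_wsqrtr.
rewrite (bigD1 j) //= lerDl; apply: sumr_ge0 => k _; exact: sqr_ge0.
Qed.

Lemma norm2_le_norm (R : realType) n (v : 'rV[R]_n) : dot v v <= n%:R * `|v| ^+ 2.
Proof.
rewrite dotE; have -> : n%:R * `|v| ^+ 2 = \sum_(j < n) `|v| ^+ 2.
  by rewrite sumr_const card_ord mulr_natl.
apply: ler_sum => j _; rewrite -expr2 -real_normK ?num_real //.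
by apply: lerXn2r; rewrite ?nnegrE ?normr_ge0 ?coord_le_norm.
Qed.

Lemma quad0 (R : realType) (a b : R) :
  (forall t : R, 2 * t * b + t ^+ 2 * a <= 0) -> b = 0.
Proof.
move=> H; pose k : R := `|a| + 1.
have k0 : 0 < k by rewrite /k ltr_pwDr // normr_ge0.
have hk : 0 < 2 * k + a.
  rewrite /k; have := ler_norm (- a); rewrite normrN => hn; move: (normr_ge0 a) hn; move: `|a| => z; lra.
set t := b / k.
have tk : b = t * k by rewrite /t mulfVK // gt_eqF.
have := H t; rewrite tk => Ht.
have : t ^+ 2 * (2 * k + a) <= 0 by move: Ht; nra.
rewrite pmulr_lle0 // => t2; have : t ^+ 2 == 0 by rewrite eq_le t2 sqr_ge0.
by rewrite sqrf_eq0 => /eqP ->; rewrite mul0r.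
Qed.

Lemma expand (R : realType) n (C : 'M[R]_n) (u w : 'rV[R]_n) (mu t : R) :
  dot ((u + t *: w) *m C) ((u + t *: w) *m C) - mu * dot (u + t *: w) (u + t *: w)
  = (dot (u *m C) (u *m C) - mu * dot u u)
    + 2 * t * (dot (u *m C) (w *m C) - mu * dot u w)
    + t ^+ 2 * (dot (w *m C) (w *m C) - mu * dot w w).
Proof.
rewrite mulmxDl -scalemxAl !dotDl !dotDr !dotZl !dotZr.
rewrite (dotC w u) (dotC (w *m C) (u *m C)).
ring.
Qed.

Lemma Pdot (R : realType) n (C : 'M[R]_n) (u w : 'rV[R]_n) (mu : R) :
  dot (u *m (C *m C^T) - mu *: u) w = dot (u *m C) (w *m C) - mu * dot u w.
Proof.
by rewrite dotDl dotNl dotZl mulmxA dot_mul trmxK.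
Qed.

Lemma rayleigh (R : realType) n (C : 'M[R]_n) :
  (forall a, eigenvalue (C *m C^T) a -> a < 1) ->
  exists2 c : R, c < 1 & forall v, dot (v *m C) (v *m C) <= c * dot v v.
Proof.
case: n C => [|n] C Heig.
  by exists 0 => // v; rewrite !dotE !big_ord0 mul0r.
pose q := fun v : 'rV[R]_n.+1 => dot (v *m C) (v *m C).
pose A := [set v : 'rV[R]_n.+1 | dot v v = 1]%classic.
have qc : continuous q.
  have -> : q = (fun v => \sum_j (v *m C) ord0 j * (v *m C) ord0 j).
    by apply/funext => v; rewrite /q dotE.
  exact: cont_quad.
have sc : continuous (fun v : 'rV[R]_n.+1 => dot v v).
  have -> : (fun v : 'rV[R]_n.+1 => dot v v) =
     (fun v => \sum_j (v *m 1%:M) ord0 j * (v *m 1%:M) ord0 j).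
    by apply/funext => v; rewrite mulmx1 dotE.
  exact: cont_quad.
have A0 : (A !=set0)%classic.
  exists (\row_j (j == ord0)%:R : 'rV[R]_n.+1).
  rewrite /A /= dotE big_ord_recl !mxE eqxx mul1r big1 ?addr0 // => i _.
  by rewrite !mxE mul0r.
have Acl : closed A.
  apply: (@preimage_closed _ _ (fun v : 'rV[R]_n.+1 => dot v v) [set 1]%classic).
    by move=> x _; exact: sc.
  exact: closed_eq.
have Abd : bounded_near (fun x : 'rV[R]_n.+1 => x) (globally A).
  have H1 : forall v, A v -> `|v| <= 1.
    move=> v Av; have := norm_le_norm2 v; by rewrite norm2E Av sqrtr1.
  rewrite /bounded_near; near=> M => v /H1 h; apply: (le_trans h); clear v h.
  near: M; exact: nbhs_pinfty_ge.
have Acp : compact A := bounded_closed_compact Abd Acl.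
have [u uA umax] := compact_EVT_max A0 Acp (continuous_subspaceT qc).
move: uA; rewrite inE /A /= => uu.
pose mu := q u.
have qle : forall v, q v <= mu * dot v v.
  move=> v; have [->|vn0] := eqVneq v 0.
    by rewrite /q mul0mx !dot0l mulr0.
  have dp : 0 < dot v v.
    rewrite lt_def dot_ge0 andbT; apply/eqP => /dot_eq0 v0; by rewrite v0 eqxx in vn0.
  pose s := Num.sqrt (dot v v).
  have s0 : 0 < s by rewrite sqrtr_gt0.
  have ss : s ^+ 2 = dot v v by rewrite sqr_sqrtr // ltW.
  have wA : s^-1 *: v \in A.
    rewrite inE /A /= dotZl dotZr mulrA -expr2 exprVn ss mulVf //.
    by rewrite gt_eqF.
  have := umax _ wA; rewrite /q -scalemxAl dotZl dotZr mulrA -expr2 exprVn ss.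
  by rewrite ler_pdivrMl // mulrC.
have eig : u *m (C *m C^T) = mu *: u.
  pose P := u *m (C *m C^T) - mu *: u.
  have Pw : forall w, dot P w = 0.
    move=> w; rewrite /P Pdot; apply: (@quad0 _ (q w - mu * dot w w)) => t.
    have := qle (u + t *: w); rewrite -subr_le0 /q expand uu.
    by rewrite -/(q u) -/mu -/(q w) mulr1 subrr add0r.
  by apply/eqP; rewrite -subr_eq0; apply/eqP/dot_eq0; rewrite Pw.
exists mu => //; apply: Heig; apply/eigenvalueP; exists u => //.
by apply/eqP => u0; move: uu; rewrite u0 dot0l => /eqP; rewrite eq_sym oner_eq0.
Unshelve. all: by end_near.
Qed.

Lemma dot_tri (R : realType) n (x y : 'rV[R]_n) (s : R) : 0 < s ->
  s * dot (x + y) (x + y) <= s * (1 + s) * dot x x + (s + 1) * dot y y.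
Proof.
move=> s0; have := dot_ge0 (s *: x - y).
rewrite !dotDl !dotDr !dotNl !dotNr !dotZl !dotZr (dotC y x).
move: (dot x x) (dot x y) (dot y y) (dot_ge0 x) (dot_ge0 y) => a b c a0 c0.
nra.
Qed.

Lemma coord_le_norm2 (R : realType) n (v : 'rV[R]_n) j : `|v ord0 j| <= norm2 v.
Proof. exact: (le_trans (coord_le_norm v j) (norm_le_norm2 v)). Qed.

Lemma op_bound (R : realType) n k (A : 'M[R]_(n, k)) :
  exists2 K : R, 0 <= K & forall x, dot (x *m A) (x *m A) <= K * dot x x.
Proof.
pose S := fun j => \sum_i `|A i j|.
exists (\sum_j S j ^+ 2); first by apply: sumr_ge0 => j _; exact: sqr_ge0.
move=> x; rewrite dotE mulr_suml; apply: ler_sum => j _.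
rewrite mxE -expr2 mulrC -(norm2_sq x) -exprMn.
rewrite -real_normK ?num_real //; apply: lerXn2r.
- by rewrite nnegrE normr_ge0.
- by rewrite nnegrE mulr_ge0 // ?sumr_ge0 // /norm2 sqrtr_ge0.
apply: (le_trans (ler_norm_sum _ _ _)); rewrite /S mulr_sumr.
apply: ler_sum => i _; rewrite normrM mulrC [_ * `|A i j|]mulrC ler_wpM2l //.
exact: coord_le_norm2.
Qed.
Lemma diff_eps (R : realType) m n (f : 'rV[R]_m -> 'rV[R]_n) x :
  differentiable f x -> forall eps : R, 0 < eps ->
  exists2 del : R, 0 < del & forall h, `|h| < del ->
   `|f (x + h) - f x - h *m 'J f x| <= eps * `|h|.
Proof.
move=> df eps e0.
have := diff_locally df => /eqaddoP /(_ eps e0).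
move=> /nbhs_ballP [del d0 Hd]; exists del => // h hd.
have : ball 0 del h by rewrite -ball_normE /ball_ /= sub0r normrN.
move/Hd => /=.
rewrite /jacobian mul_rV_lin1 addrC.
move=> /=; rewrite opprD addrC (addrC x) !addrA; done. Qed.


Unset Implicit Arguments. Set Strict Implicit.

Theorem theorem2 (R : realType) (m n : nat)
  (f : 'rV[R]_m -> 'rV[R]_n) (g : 'rV[R]_n -> 'rV[R]_m) (h_prev : 'rV[R]_m) :
  differentiable f h_prev ->
  differentiable g (f h_prev) ->
  (forall a : R,
     eigenvalue ((1%:M - Jac f h_prev *m Jac g (f h_prev))^T
                 *m (1%:M - Jac f h_prev *m Jac g (f h_prev))) a -> a < 1) ->
  exists2 delta : R, 0 < delta &
    forall hhat : 'rV[R]_n,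
      0 < norm2 (hhat - f h_prev) < delta ->
      norm2 (hhat - f (dtp_target g h_prev (f h_prev) hhat)) ^+ 2
        < norm2 (hhat - f h_prev) ^+ 2.
Proof.
move=> df dg Heig.
set h := f h_prev.
pose JF := 'J f h_prev. pose JG := 'J g h.
pose C : 'M[R]_n := 1%:M - JG *m JF.
have eqM : (1%:M - Jac f h_prev *m Jac g h)^T *m (1%:M - Jac f h_prev *m Jac g h)
    = C *m C^T.
  have -> : 1%:M - Jac f h_prev *m Jac g h = C^T.
    by rewrite /C /Jac linearB /= trmx1 trmx_mul.
  by rewrite trmxK.
have [c c1 Hc] : exists2 c : R, c < 1 & forall v, dot (v *m C) (v *m C) <= c * dot v v.
  by apply: rayleigh => a; rewrite -eqM; exact: Heig.
have [KF KF0 HKF] := op_bound JF.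
have [KG KG0 HKG] := op_bound JG.
pose mr : R := m%:R. pose nr : R := n%:R.
have mr0 : 0 <= mr by rewrite /mr ler0n.
have nr0 : 0 <= nr by rewrite /nr ler0n.
pose s := (1 - c) / 2 / (`|c| + 1).
have s0 : 0 < s.
  rewrite /s divr_gt0 // ?ltr_pwDr ?normr_ge0 //; rewrite divr_gt0 //; lra.
pose gap := 1 - (1 + s) * c.
have gap0 : 0 < gap.
  have sz : s * (`|c| + 1) = (1 - c) / 2.
    by rewrite /s mulfVK // gt_eqF // ltr_pwDr ?normr_ge0.
  have cz := ler_norm c.
  rewrite /gap; move: sz cz (normr_ge0 c) s0; move: `|c| => z; nra.
pose W := 2 * KG + 2 * mr.
have W0 : 0 <= W by rewrite /W; lra.
pose L := 2 * KF * mr + 2 * nr * W.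
have L0 : 0 <= L by rewrite /L; nra.
pose eps := Num.min 1 (s * gap / ((s + 1) * L + 1)).
have D0 : 0 < (s + 1) * L + 1 by nra.
have eps0 : 0 < eps by rewrite /eps lt_min ltr01 /= divr_gt0 // mulr_gt0.
have eps1 : eps <= 1 by rewrite /eps ge_min lexx.
have epsb : (s + 1) * L * eps ^+ 2 < s * gap.
  have e2 : eps ^+ 2 <= eps by rewrite expr2 ger_pMr.
  have e3 : eps <= s * gap / ((s + 1) * L + 1) by rewrite /eps ge_min lexx orbT.
  move: e3; rewrite ler_pdivlMr // => e3.
  have sg : 0 < s * gap by rewrite mulr_gt0.
  nra.
have [d1 d10 Hd1] := diff_eps dg eps0.
have [d2 d20 Hd2] := diff_eps df eps0.
pose delta := Num.min d1 (d2 / (W + 1)).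
exists delta; first by rewrite /delta lt_min d10 divr_gt0 //; lra.
move=> hhat /andP [nd0 ndlt].
set d := hhat - h.
have hd : hhat = h + d by rewrite /d addrC subrK.
have Qd0 : 0 < dot d d.
  by move: nd0; rewrite norm2E sqrtr_gt0.
have nd_d : `|d| <= norm2 d := norm_le_norm2 d.
have nd2 : `|d| ^+ 2 <= dot d d.
  rewrite -norm2_sq; apply: lerXn2r => //; rewrite nnegrE; first exact: normr_ge0. by rewrite /norm2 sqrtr_ge0.
pose t := g hhat - g h.
pose e1 := t - d *m JG.
have He1 : `|e1| <= eps * `|d|.
  rewrite /e1 /t hd; apply: Hd1.
  apply: (le_lt_trans nd_d); apply: (lt_le_trans ndlt); by rewrite /delta ge_min lexx.
have H1 : dot e1 e1 <= mr * eps ^+ 2 * dot d d.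
  apply: (le_trans (norm2_le_norm e1)); rewrite -/mr -mulrA ler_wpM2l //.
  apply: (le_trans (y := (eps * `|d|) ^+ 2)).
    by apply: lerXn2r; rewrite ?nnegrE ?normr_ge0 // mulr_ge0 ?normr_ge0 // ltW.
  by rewrite exprMn ler_wpM2l // exprn_ge0 // ltW.
have ee : eps ^+ 2 <= 1 by rewrite expr_le1 // ltW.
have tE : t = d *m JG + e1 by rewrite /e1 addrC subrK.
have H2 : dot t t <= W * dot d d.
  have := dot_tri (d *m JG) e1 ltr01; rewrite -tE !mul1r => T.
  have := HKG d => T2.
  have T3 : mr * eps ^+ 2 * dot d d <= mr * dot d d.
    by rewrite ler_pM2r // ler_piMr.
  rewrite /W; move: T T2 T3 H1; move: (dot t t) (dot e1 e1) (dot (d *m JG) (d *m JG)).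
  move=> a b c0; nra.
have nt2 : `|t| ^+ 2 <= dot t t.
  rewrite -norm2_sq; apply: lerXn2r; rewrite ?nnegrE; [exact: normr_ge0 | by rewrite /norm2 sqrtr_ge0 | exact: norm_le_norm2].
have ntd : `|t| < d2.
  pose p := d2 / (W + 1).
  have p0 : 0 < p by rewrite divr_gt0 //; lra.
  have pW : d2 = p * (W + 1) by rewrite /p mulfVK // gt_eqF //; lra.
  have dp : norm2 d < p by apply: (lt_le_trans ndlt); rewrite /delta ge_min lexx orbT.
  have Qp : dot d d < p ^+ 2.
    have n0 : 0 <= norm2 d by rewrite /norm2 sqrtr_ge0.
    rewrite -norm2_sq; move: dp n0; move: (norm2 d) => x; nra.
  have tn := normr_ge0 t.
  move: nt2 H2 Qp tn; rewrite pW; move: `|t| (dot t t) (dot d d) => x y z.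
  nra.
pose e2 := f (h_prev + t) - h - t *m JF.
have He2 : `|e2| <= eps * `|t| by apply: Hd2.
have H3 : dot e2 e2 <= nr * eps ^+ 2 * dot t t.
  apply: (le_trans (norm2_le_norm e2)); rewrite -/nr -mulrA ler_wpM2l //.
  apply: (le_trans (y := (eps * `|t|) ^+ 2)).
    by apply: lerXn2r; rewrite ?nnegrE ?normr_ge0 // mulr_ge0 ?normr_ge0 // ltW.
  by rewrite exprMn ler_wpM2l // exprn_ge0 // ltW.
pose r := - (e1 *m JF) + - e2.
have EE : hhat - f (dtp_target g h_prev h hhat) = d *m C + r.
  rewrite /dtp_target -addrA -/t /r /C /e1 /e2.
  move: (d) (t) hd => d' t' ->.
  rewrite mulmxBr mulmx1 [(t' - _) *m JF]mulmxBl mulmxA.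
  move: (d' *m JG *m JF) (t' *m JF) (f (h_prev + t')) => a b F.
  by apply/rowP => j; rewrite !mxE; ring.
have Hr : dot r r <= eps ^+ 2 * L * dot d d.
  have := dot_tri (- (e1 *m JF)) (- e2) ltr01; rewrite !mul1r -/r.
  rewrite !dotNl !dotNr !opprK => T.
  have T2 := HKF e1.
  have T4 : KF * dot e1 e1 <= KF * (mr * eps ^+ 2 * dot d d) by rewrite ler_wpM2l.
  have T5 : nr * eps ^+ 2 * dot t t <= nr * eps ^+ 2 * (W * dot d d).
    by rewrite ler_wpM2l // mulr_ge0 // exprn_ge0 // ltW.
  rewrite /L; move: T T2 T4 T5 H3; move: (dot r r) (dot e1 e1) (dot e2 e2) (dot t t).
  move=> a b c0 x; nra.
have HE := dot_tri (d *m C) r s0.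
have HdC := Hc d.
rewrite -EE in HE.
rewrite !norm2_sq.
move: HE; set QE := dot (hhat - _) _ => HE.
have T1 : s * (1 + s) * dot (d *m C) (d *m C) <= s * (1 + s) * (c * dot d d).
  by rewrite ler_wpM2l // mulr_ge0 //; lra.
have T2 : (s + 1) * dot r r <= (s + 1) * (eps ^+ 2 * L * dot d d).
  by rewrite ler_wpM2l //; lra.
have T3 : (s + 1) * L * eps ^+ 2 * dot d d < s * gap * dot d d.
  by rewrite ltr_pM2r.
rewrite /gap in T3.
have : s * QE < s * dot d d.
  move: HE T1 T2 T3; move: (dot (d *m C) (d *m C)) (dot r r) (dot d d) => a b x.
  nra.
by rewrite ltr_pM2l.
Qed.
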